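(* For every positive integer $r$ there exists a partition $\mathbb N=A_1\cup A_2\cup\cdots\cup A_r$ into pairwise disjoint sets such that for every $1\le i\le r$ and every $n\ge0$, the set $A_i-n$ is a central set.
   Context: $\mathbb N=\{0,1,2,\dots\}$; for $A\subseteq\mathbb N$ and $n\in\mathbb N$, $A-n=\{m\in\mathbb N: m+n\in A\}$. $\beta\mathbb N$ is the set of ultrafilters on $\mathbb N$ with addition $A\in p+q$ iff $\{n:A-n\in p\}\in q$; a minimal idempotent is a non-principal ultrafilter $p$ with $p+p=p$ lying in the smallest two-sided ideal of $\beta\mathbb N$; a set is central if it belongs to some minimal idempotent. *)

(* Defs.v *)
From Stdlib Require Import Arith.

Definition shift (A : nat -> Prop) (n : nat) : nat -> Prop :=
  fun m => A (m + n).

(* Points of beta N: ultrafilters on nat, as families of subsets. *)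
Definition is_ultrafilter (p : (nat -> Prop) -> Prop) : Prop :=
  p (fun _ => True) /\
  ~ p (fun _ => False) /\
  (forall A B : nat -> Prop, p A -> (forall m, A m -> B m) -> p B) /\
  (forall A B : nat -> Prop, p A -> p B -> p (fun m => A m /\ B m)) /\
  (forall A : nat -> Prop, p A \/ p (fun m => ~ A m)).

Definition nonprincipal (p : (nat -> Prop) -> Prop) : Prop :=
  forall n : nat, ~ p (fun m => m = n).

Definition ufadd (p q : (nat -> Prop) -> Prop) : (nat -> Prop) -> Prop :=
  fun A => q (fun n => p (shift A n)).

Definition two_sided_ideal (I : ((nat -> Prop) -> Prop) -> Prop) : Prop :=
  (forall p, I p -> is_ultrafilter p) /\
  (exists p, I p) /\
  (forall p q, is_ultrafilter p -> I q -> I (ufadd p q) /\ I (ufadd q p)).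

Definition in_smallest_ideal (p : (nat -> Prop) -> Prop) : Prop :=
  exists K : ((nat -> Prop) -> Prop) -> Prop,
    two_sided_ideal K /\
    (forall I, two_sided_ideal I -> forall q, K q -> I q) /\
    K p.

Definition minimal_idempotent (p : (nat -> Prop) -> Prop) : Prop :=
  is_ultrafilter p /\ nonprincipal p /\ ufadd p p = p /\ in_smallest_ideal p.

Definition central (A : nat -> Prop) : Prop :=
  exists p, minimal_idempotent p /\ p A.

(* Main.v *)
Require Import Defs.
From Stdlib Require Import Arith Lia Classical FunctionalExtensionality PropExtensionality.
From mathcomp Require classical_sets filter.
Set Bullet Behavior "Strict Subproofs".

Lemma uf_extend (F : (nat -> Prop) -> Prop) :
  (forall A B, F A -> F B -> F (fun m => A m /\ B m)) ->
  (forall A, F A -> exists m, A m) ->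
  exists u, is_ultrafilter u /\ forall A, F A -> u A.
Proof.
  intros HI HN.
  set (G := fun A : nat -> Prop => (forall m, A m) \/ exists B, F B /\ forall m, B m -> A m).
  assert (GF : mathcomp.classical.filter.Filter G).
  { constructor.
    - left; intros; exact I.
    - intros A B [HA|[A' [FA HA]]] [HB|[B' [FB HB]]].
      + left; intro m; split; auto.
      + right; exists B'; split; auto. intros m h; split; auto.
      + right; exists A'; split; auto. intros m h; split; auto.
      + right; exists (fun m => A' m /\ B' m); split; auto.
        intros m [h1 h2]; split; auto.
    - intros P Q hPQ [HP|[B [FB HB]]].
      + left; intro m; apply hPQ; auto.
      + right; exists B; split; auto. }
  assert (GP : mathcomp.classical.filter.ProperFilter G).
  { apply (mathcomp.classical.filter.Build_ProperFilter_ex (F:=G)); [|exact GF].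
    intros P [HP|[B [FB HB]]].
    - exists 0; auto.
    - destruct (HN B FB) as [m hm]; exists m; auto. }
  destruct (mathcomp.classical.filter.ultraFilterLemma GP) as [U [HU HGU]].
  exists U; split.
  - pose proof HU as HU0; destruct HU0 as [UP _].
    pose proof (@mathcomp.classical.filter.filter_not_empty _ U UP) as hne.
    pose proof (@mathcomp.classical.filter.filter_filter _ U UP) as UF.
    split; [|split; [|split; [|split]]].
    + apply (@mathcomp.classical.filter.filterT _ U UF).
    + exact hne.
    + intros A B hA hAB. exact (@mathcomp.classical.filter.filterS _ U UF A B hAB hA).
    + intros A B hA hB. exact (@mathcomp.classical.filter.filterI _ U UF A B hA hB).
    + intro A. exact (@mathcomp.classical.filter.in_ultra_setVsetC _ U A HU).
  - intros A FA. apply HGU. right; exists A; split; auto.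
Qed.

Lemma min_exists {T : Type} (P : (T -> Prop) -> Prop) (T0 : T -> Prop) :
  P T0 ->
  (forall C C', P C -> (forall u, C u <-> C' u) -> P C') ->
  (forall Phi : (T -> Prop) -> Prop,
     (forall C, Phi C -> P C /\ forall u, C u -> T0 u) ->
     (forall C1 C2, Phi C1 -> Phi C2 ->
        (forall u, C1 u -> C2 u) \/ (forall u, C2 u -> C1 u)) ->
     P (fun u => T0 u /\ forall C, Phi C -> C u)) ->
  exists C, P C /\ (forall u, C u -> T0 u) /\
    forall C', P C' -> (forall u, C' u -> C u) -> forall u, C u -> C' u.
Proof.
  intros HT0 Hext Hch.
  set (P' := fun X : T -> Prop => P (fun u => T0 u /\ ~ X u)).
  destruct (@mathcomp.classical.classical_sets.Zorn_bigcup T P') as [A [PA Amax]].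
  - intros F FP Ftot.
    set (Phi := fun C : T -> Prop => exists X, F X /\ C = (fun u => T0 u /\ ~ X u)).
    assert (H := Hch Phi).
    assert (H1 : forall C, Phi C -> P C /\ forall u, C u -> T0 u).
    { intros C [X [FX ->]]. split; [apply (FP X FX)|]. intros u [h _]; exact h. }
    assert (H2 : forall C1 C2, Phi C1 -> Phi C2 ->
        (forall u, C1 u -> C2 u) \/ (forall u, C2 u -> C1 u)).
    { intros C1 C2 [X1 [F1 ->]] [X2 [F2 ->]].
      destruct (Ftot X1 X2 F1 F2) as [h|h].
      - right. intros u [a b]; split; auto.
      - left. intros u [a b]; split; auto. }
    specialize (H H1 H2).
    unfold P'. apply (Hext _ _ H).
    intro u; split.
    + intros [a b]; split; auto. intros [X FX Xu].
      apply (b (fun u => T0 u /\ ~ X u)); [exists X; split; auto| exact Xu].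
    + intros [a b]; split; auto. intros C [X [FX ->]]. split; auto.
      intro Xu. apply b. exists X; auto.
  - exists (fun u => T0 u /\ ~ A u). split; [exact PA|]. split.
    + intros u [h _]; exact h.
    + intros C' PC' sub u [h1 h2].
      set (Y := fun u => A u \/ ~ C' u).
      assert (PY : P' Y).
      { unfold P'. apply (Hext _ _ PC'). intro v; split.
        - intro hv. destruct (sub v hv) as [a b]. split; auto.
          intros [c|c]; auto.
        - intros [a b]. apply NNPP. intro hn. apply b. right; exact hn. }
      assert (YA : forall v, Y v -> A v).
      { apply NNPP. intro hn. apply (Amax Y); [|exact PY].
        split; [intros v hv; left; exact hv| exact hn]. }
      apply NNPP. intro hn. apply h2. apply YA. right; exact hn.
Qed.

Definition U := (nat -> Prop) -> Prop.
Definition uf := is_ultrafilter.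

Lemma uf_mono u A B : uf u -> u A -> (forall m, A m -> B m) -> u B.
Proof. intros [_ [_ [h _]]] hA hAB; eauto. Qed.
Lemma uf_inter u A B : uf u -> u A -> u B -> u (fun m => A m /\ B m).
Proof. intros [_ [_ [_ [h _]]]]; eauto. Qed.
Lemma uf_ultra u A : uf u -> u A \/ u (fun m => ~ A m).
Proof. intros [_ [_ [_ [_ h]]]]; eauto. Qed.
Lemma uf_top u : uf u -> u (fun _ => True).
Proof. intros [h _]; exact h. Qed.
Lemma uf_ne u A : uf u -> u A -> exists m, A m.
Proof.
  intros hu hA. apply NNPP; intro hn. pose proof hu as [_ [h0 _]]. apply h0.
  apply (uf_mono u A); auto. intros m hm; apply hn; eauto.
Qed.
Lemma uf_not u A : uf u -> u A -> ~ u (fun m => ~ A m).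
Proof.
  intros hu hA hB. destruct (uf_ne u _ hu (uf_inter u _ _ hu hA hB)) as [m [a b]]; auto.
Qed.
Lemma uf_compl u A : uf u -> ~ u A -> u (fun m => ~ A m).
Proof. intros hu h. destruct (uf_ultra u A hu); tauto. Qed.

Lemma ufadd_uf u v : uf u -> uf v -> uf (ufadd u v).
Proof.
  intros hu hv. unfold ufadd. split; [|split; [|split; [|split]]].
  - apply (uf_mono v (fun _ => True) _ hv (uf_top v hv)). intros m _.
    apply (uf_mono u _ _ hu (uf_top u hu)). intros; exact I.
  - intro h. destruct (uf_ne v _ hv h) as [m hm].
    destruct (uf_ne u _ hu hm) as [k hk]. exact hk.
  - intros A B hA hAB. apply (uf_mono v _ _ hv hA). intros m hm.
    apply (uf_mono u _ _ hu hm). intros k; unfold shift; auto.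
  - intros A B hA hB. apply (uf_mono v _ _ hv (uf_inter v _ _ hv hA hB)).
    intros m [h1 h2]. exact (uf_inter u _ _ hu h1 h2).
  - intro A. destruct (uf_ultra v (fun n => u (shift A n)) hv) as [h|h]; [left; exact h|right].
    apply (uf_mono v _ _ hv h). intros m hm. exact (uf_compl u (shift A m) hu hm).
Qed.

Lemma shift_shift A n m : shift (shift A n) m = shift A (m + n).
Proof. apply functional_extensionality; intro x; unfold shift. rewrite Nat.add_assoc; reflexivity. Qed.

Lemma ufadd_assoc u v w : ufadd (ufadd u v) w = ufadd u (ufadd v w).
Proof.
  apply functional_extensionality; intro A. unfold ufadd.
  f_equal. apply functional_extensionality; intro n. f_equal.
  apply functional_extensionality; intro m. rewrite shift_shift. reflexivity.
Qed.

Definition cl (C : U -> Prop) : Prop :=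
  forall u, uf u -> (forall A, u A -> exists w, C w /\ w A) -> C u.

Lemma compact (Phi : (U -> Prop) -> Prop) :
  (forall C, Phi C -> cl C /\ (exists w, C w) /\ forall w, C w -> uf w) ->
  (forall C1 C2, Phi C1 -> Phi C2 ->
        (forall u, C1 u -> C2 u) \/ (forall u, C2 u -> C1 u)) ->
  exists u, uf u /\ forall C, Phi C -> C u.
Proof.
  intros H Hch.
  set (F := fun A => exists C, Phi C /\ forall w, C w -> w A).
  destruct (uf_extend F) as [u [hu hF]].
  - intros A B [C1 [P1 h1]] [C2 [P2 h2]].
    destruct (Hch C1 C2 P1 P2) as [s|s].
    + exists C1; split; auto. intros w hw. destruct (H C1 P1) as [_ [_ hu1]].
      apply uf_inter; [auto| apply h1; auto| apply h2; auto].
    + exists C2; split; auto. intros w hw. destruct (H C2 P2) as [_ [_ hu2]].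
      apply uf_inter; [auto| apply h1; auto| apply h2; auto].
  - intros A [C [PC h]]. destruct (H C PC) as [_ [[w hw] hu]].
    exact (uf_ne w A (hu w hw) (h w hw)).
  - exists u; split; auto. intros C PC. destruct (H C PC) as [hc _].
    apply hc; auto. intros A hA. apply NNPP; intro hn.
    assert (F (fun m => ~ A m)).
    { exists C; split; auto. intros w hw. apply uf_compl.
      - exact (proj2 (proj2 (H C PC)) w hw).
      - intro; apply hn; eauto. }
    exact (uf_not u A hu hA (hF _ H0)).
Qed.

Definition BA (x : U) (A : nat -> Prop) : nat -> Prop := fun n => x (shift A n).

Lemma BA_disj x u A : uf x -> uf u -> u (BA x A) -> u (BA x (fun m => ~ A m)) -> False.
Proof.
  intros hx hu h1 h2. destruct (uf_ne u _ hu (uf_inter u _ _ hu h1 h2)) as [n [a b]].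
  exact (uf_not x (shift A n) hx a b).
Qed.

Lemma image_cl x C : uf x -> cl C -> (forall w, C w -> uf w) ->
  cl (fun t => exists v, C v /\ t = ufadd x v).
Proof.
  intros hx hC hCu t ht h.
  set (F := fun D => exists A, t A /\ forall w, C w -> w (BA x A) -> w D).
  destruct (uf_extend F) as [v [hv hF]].
  - intros D1 D2 [A1 [t1 h1]] [A2 [t2 h2]].
    exists (fun m => A1 m /\ A2 m). split; [apply uf_inter; auto|].
    intros w hw hwA. apply uf_inter; [auto| apply h1; auto | apply h2; auto].
    + apply (uf_mono w _ _ (hCu w hw) hwA). intros n hn.
      apply (uf_mono x _ _ hx hn). intros m [a b]; exact a.
    + apply (uf_mono w _ _ (hCu w hw) hwA). intros n hn.
      apply (uf_mono x _ _ hx hn). intros m [a b]; exact b.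
  - intros D [A [tA hA]]. destruct (h A tA) as [w [[v [Cv ->]] wA]].
    apply (uf_ne v D (hCu v Cv)). apply hA; auto.
  - exists v. assert (Cv : C v).
    { apply hC; auto. intros D hD. apply NNPP; intro hn.
      assert (F (fun m => ~ D m)).
      { exists (fun _ => True). split; [apply uf_top; auto|].
        intros w hw _. apply uf_compl; auto. intro; apply hn; eauto. }
      exact (uf_not v D hv hD (hF _ H)). }
    split; auto.
    apply functional_extensionality; intro A. apply propositional_extensionality.
    split.
    + intro tA. apply hF. exists A; split; auto.
    + intro hvA. apply NNPP; intro hn.
      apply (BA_disj x v A hx hv hvA). apply hF.
      exists (fun m => ~ A m). split; [apply uf_compl; auto|]. auto.
Qed.

Lemma fix_aux x M u A : uf x -> uf u -> (forall w, M w -> uf w) ->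
  (forall A, u A -> exists w, (M w /\ ufadd x w = x) /\ w A) ->
  x A -> u (BA x A).
Proof.
  intros hx hu hMu h xA. apply NNPP; intro hn.
  destruct (h _ (uf_compl u _ hu hn)) as [w [[Mw e] wA]].
  assert (hw : w (BA x A)) by (change (ufadd x w A); rewrite e; exact xA).
  exact (uf_not w _ (hMu w Mw) hw wA).
Qed.

Lemma fix_cl x M : uf x -> cl M -> (forall w, M w -> uf w) ->
  cl (fun y => M y /\ ufadd x y = x).
Proof.
  intros hx hM hMu u hu h. split.
  - apply hM; auto. intros A hA. destruct (h A hA) as [w [[Mw _] wA]]; eauto.
  - apply functional_extensionality; intro A. apply propositional_extensionality.
    split.
    + intro hA. change (u (BA x A)) in hA. apply NNPP; intro hn.
      pose proof (fix_aux x M u _ hx hu hMu h (uf_compl x A hx hn)) as h2.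
      exact (BA_disj x u A hx hu hA h2).
    + intro xA. exact (fix_aux x M u A hx hu hMu h xA).
Qed.

Definition Op1 (C : U -> Prop) := forall u v, C u -> uf v -> C (ufadd u v).
Definition Op2 (C : U -> Prop) := forall u v, C u -> C v -> C (ufadd u v).
Definition PP (Op : (U -> Prop) -> Prop) (C : U -> Prop) :=
  (exists w, C w) /\ cl C /\ (forall w, C w -> uf w) /\ Op C.

Lemma min_closed (Op : (U -> Prop) -> Prop) (T0 : U -> Prop) :
  PP Op T0 ->
  (forall Phi : (U -> Prop) -> Prop, (forall C, Phi C -> Op C) ->
     Op (fun u => T0 u /\ forall C, Phi C -> C u)) ->
  exists C, PP Op C /\ (forall u, C u -> T0 u) /\
    forall C', PP Op C' -> (forall u, C' u -> C u) -> forall u, C u -> C' u.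
Proof.
  intros HT0 HOp. apply min_exists; auto.
  - intros C C' hC e. replace C' with C; auto.
    apply functional_extensionality; intro u; apply propositional_extensionality; apply e.
  - intros Phi hPhi hch. destruct HT0 as [ne0 [cl0 [uf0 op0]]].
    split; [|split; [|split]].
    + destruct (compact (fun C => Phi C \/ C = T0)) as [u [hu hall]].
      * intros C [hC| ->]; [|auto].
        destruct (hPhi C hC) as [[a [b [c _]]] _]; auto.
      * intros C1 C2 [h1| ->] [h2| ->].
        -- apply hch; auto.
        -- left; apply (hPhi C1 h1).
        -- right; apply (hPhi C2 h2).
        -- left; auto.
      * exists u; split; [apply hall; auto|]. intros C hC; apply hall; auto.
    + intros u hu h. split.
      * apply cl0; auto. intros A hA. destruct (h A hA) as [w [[a b] c]]; eauto.
      * intros C hC. destruct (hPhi C hC) as [[_ [clC _]] _]. apply clC; auto.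
        intros A hA. destruct (h A hA) as [w [[a b] c]]. exists w; split; [apply b; exact hC | exact c].
    + intros w [a _]; auto.
    + apply HOp. intros C hC. apply (hPhi C hC).
Qed.

Lemma idem_exists (F : (nat -> Prop) -> Prop) :
  (forall A B, F A -> F B -> F (fun m => A m /\ B m)) ->
  (forall A, F A -> exists m, A m) ->
  (forall A m, F A -> exists A', F A' /\ forall y, A' y -> shift A m y) ->
  (forall k, F (fun m => k <= m)) ->
  exists p, minimal_idempotent p /\ forall A, F A -> p A.
Proof.
  intros FI FN FS FT.
  set (T0 := fun u => uf u /\ forall A, F A -> u A).
  assert (PT0 : PP Op1 T0).
  { split; [|split; [|split]].
    - destruct (uf_extend F FI FN) as [u hu]. exists u; exact hu.
    - intros u hu h. split; auto. intros A FA. apply NNPP; intro hn.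
      destruct (h _ (uf_compl u A hu hn)) as [w [[hw1 hw2] hwA]].
      exact (uf_not w A hw1 (hw2 A FA) hwA).
    - intros w [a _]; exact a.
    - intros u v [hu hF] hv. split; [apply ufadd_uf; auto|].
      intros A FA. unfold ufadd. apply (uf_mono v _ _ hv (uf_top v hv)).
      intros m _. destruct (FS A m FA) as [A' [FA' sA']].
      apply (uf_mono u A' _ hu (hF A' FA')). exact sA'. }
  destruct (min_closed Op1 T0 PT0) as [R [PR [RT0 Rmin]]].
  { intros Phi hPhi u v [h1 h2] hv. split.
    - apply (proj2 (proj2 (proj2 PT0))); auto.
    - intros C hC. apply (hPhi C hC); [apply h2; exact hC| exact hv]. }
  assert (PR2 : PP Op2 R).
  { destruct PR as [a [b [c d]]]. split; [|split; [|split]]; auto.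
    intros u v hu hv. apply d; auto. }
  destruct (min_closed Op2 R PR2) as [M [PM [MR Mmin]]].
  { intros Phi hPhi u v [h1 h2] [h3 h4]. split.
    - apply (proj2 (proj2 (proj2 PR2))); auto.
    - intros C hC. apply (hPhi C hC); [apply h2; exact hC| apply h4; exact hC]. }
  destruct PM as [[x Mx] [clM [ufM opM]]].
  assert (hx : uf x) by auto.
  (* x * M = M *)
  set (M' := fun t => exists v, M v /\ t = ufadd x v).
  assert (PM' : PP Op2 M').
  { split; [|split; [|split]].
    - exists (ufadd x x). exists x; auto.
    - apply image_cl; auto.
    - intros w [v [Mv ->]]. apply ufadd_uf; auto.
    - intros t1 t2 [v1 [M1 ->]] [v2 [M2 ->]].
      exists (ufadd v1 (ufadd x v2)). split.
      + apply opM; auto.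
      + rewrite ufadd_assoc. reflexivity. }
  assert (xM' : M' x).
  { apply (Mmin M' PM'); auto. intros t [v [Mv ->]]; apply opM; auto. }
  destruct xM' as [v0 [Mv0 e0]].
  set (E := fun y => M y /\ ufadd x y = x).
  assert (PE : PP Op2 E).
  { split; [|split; [|split]].
    - exists v0. split; auto.
    - apply fix_cl; auto.
    - intros w [a _]; auto.
    - intros u v [Mu eu] [Mv ev]. split; [apply opM; auto|].
      rewrite <- ufadd_assoc, eu, ev. reflexivity. }
  assert (xE : E x) by (apply (Mmin E PE); [intros u [a _]; exact a| exact Mx]).
  destruct xE as [_ idem].
  assert (xR : R x) by (apply MR; exact Mx).
  destruct PR as [_ [_ [ufR opR]]].
  assert (xI : forall I, two_sided_ideal I -> I x).
  { intros I [IU [[w Iw] Icl]].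
    set (y := ufadd x w).
    assert (Iy : I y) by (apply (Icl x w hx Iw)).
    assert (hy : uf y) by (apply ufadd_uf; [exact hx| exact (IU w Iw)]).
    set (R' := fun t => exists v, uf v /\ t = ufadd y v).
    assert (PR' : PP Op1 R').
    { split; [|split; [|split]].
      - exists (ufadd y y). exists y; split; auto.
      - apply image_cl; auto. intros u hu _; exact hu.
      - intros t [v [hv ->]]. apply ufadd_uf; auto.
      - intros t v' [v [hv ->]] hv'. exists (ufadd v v'). split.
        + apply ufadd_uf; auto.
        + apply ufadd_assoc. }
    assert (yR : R y) by (apply opR; [exact xR| exact (IU w Iw)]).
    assert (xR' : R' x).
    { apply (Rmin R' PR'); [|exact xR]. intros t [v [hv ->]]. apply opR; [exact yR| exact hv]. }
    destruct xR' as [v [hv e]]. rewrite e. apply (Icl v y hv Iy). }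
  set (K := fun q => uf q /\ forall I, two_sided_ideal I -> I q).
  assert (TK : two_sided_ideal K).
  { split; [|split].
    - intros q [a _]; exact a.
    - exists x. split; auto.
    - intros p q hp [hq hI]. split; split; try (apply ufadd_uf; auto);
        intros I hIdeal; apply (proj2 (proj2 hIdeal) p q hp (hI I hIdeal)). }
  assert (xT0 : T0 x) by (apply RT0; exact xR).
  exists x. split.
  - split; [exact hx|split; [|split; [exact idem|]]].
    + intros n hn. destruct xT0 as [_ hF].
      destruct (uf_ne x _ hx (uf_inter x _ _ hx hn (hF _ (FT (S n))))) as [m [a b]].
      subst m. apply (Nat.nle_succ_diag_l n); exact b.
    + exists K. split; [exact TK|split].
      * intros I hI q [_ hq]. apply hq; auto.
      * split; auto.
  - intros A FA. apply (proj2 xT0); auto.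
Qed.

Definition thick (B : nat -> Prop) := forall N k, exists x, k <= x /\ forall j, j <= N -> B (x + j).

Lemma thick_central B : thick B -> central B.
Proof.
  intro hB.
  set (F := fun A : nat -> Prop => exists N k, forall x, k <= x -> (forall j, j <= N -> B (x + j)) -> A x).
  destruct (idem_exists F) as [p [hp hF]].
  - intros A1 A2 [N1 [k1 h1]] [N2 [k2 h2]]. exists (max N1 N2), (max k1 k2).
    intros x hx hj. split.
    + apply h1; [lia|]. intros j hj'; apply hj; lia.
    + apply h2; [lia|]. intros j hj'; apply hj; lia.
  - intros A [N [k h]]. destruct (hB N k) as [x [hx hj]]. exists x; auto.
  - intros A m [N [k h]]. exists (fun y => k <= y /\ forall j, j <= N + m -> B (y + j)).
    split.
    + exists (N + m), k. intros x hx hj; split; auto.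
    + intros y [hy hj]. unfold shift. apply h; [lia|].
      intros j hj'. replace (y + m + j) with (y + (m + j)) by lia. apply hj; lia.
  - intro k. exists 0, k. intros x hx _; exact hx.
  - exists p; split; auto. apply hF. exists 0, 0. intros x _ hj.
    replace x with (x + 0) by lia. apply hj; lia.
Qed.

Theorem theorem7 (r : nat) (hr : 0 < r) :
  exists A : nat -> nat -> Prop,
    (forall m : nat, exists i, i < r /\ A i m) /\
    (forall i j m : nat, i < r -> j < r -> A i m -> A j m -> i = j) /\
    (forall i : nat, i < r -> forall n : nat, central (shift (A i) n)).
Proof.
  exists (fun i m => Nat.log2 m mod r = i). split; [|split].
  - intro m. exists (Nat.log2 m mod r). split; auto. apply Nat.mod_upper_bound; lia.
  - intros i j m _ _ h1 h2. congruence.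
  - intros i hi n. apply thick_central. intros N k.
    set (e := i + (k + n + N + 1) * r).
    assert (he : e < 2 ^ e) by (apply Nat.pow_gt_lin_r; lia).
    assert (he2 : k + n + N + 1 <= e) by (unfold e; nia).
    exists (2 ^ e - n). split; [lia|].
    intros j hj. unfold shift.
    replace (2 ^ e - n + j + n) with (2 ^ e + j) by lia.
    rewrite (Nat.log2_unique (2 ^ e + j) e).
    + unfold e. rewrite Nat.Div0.mod_add. apply Nat.mod_small; exact hi.
    + lia.
    + rewrite Nat.pow_succ_r'. lia.
Qed.
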